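(* Let $G$ be a graph with minimum degree $\delta(G)\ge 2$ and $\mu(G)\le\delta(G)-1$, and let $S,T$ be disjoint vertex sets such that $(S,T)$ realizes $\mu(G)$. Then $|S|\ge\delta(G)-1$, and if $|S|=\delta(G)-1$ then $\mu(G)=\delta(G)-1$.
   Context: All graphs are finite and simple; $\delta(G)$ is the minimum degree. For a graph $G=(V,E)$ on $n$ vertices, a fractional vertex cover is a function $f:V\to[0,\infty)$ with $f(u)+f(v)\ge 1$ for every edge $uv\in E$; $\tau^*(G)$ denotes the minimum of $\sum_{v\in V}f(v)$ over all fractional vertex covers. For $E'\subseteq E$ let $G-E'=(V,E\setminus E')$, and $\mu(G)=\min\{|E'| : E'\subseteq E,\ \tau^*(G-E')<n/2\}$. For disjoint $S,T\subseteq V$, $E_G(S;V\setminus T)$ is the set of edges with both endpoints in $S$ or with one endpoint in $S$ and the other in $V\setminus(S\cup T)$. It holds that $\mu(G)=\min|E_G(S;V\setminus T)|$ over disjoint $S,T$ with $|S|>|T|$; a pair $(S,T)$ of disjoint subsets with $|S|>|T|$ and $|E_G(S;V\setminus T)|=\mu(G)$ is said to realize $\mu(G)$. *)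

(* Defs.v *)
From HB Require Import structures.
From mathcomp Require Import all_boot all_order all_algebra.
From mathcomp Require Import reals.
Set Implicit Arguments. Unset Strict Implicit. Unset Printing Implicit Defensive.
Import Order.TTheory GRing.Theory Num.Theory.

(* A finite simple graph: vertex set T (a finType), adjacency e : rel T,
   assumed symmetric and irreflexive in the theorem. Edges are 2-element sets. *)
Section Graph.
Variables (T : finType) (e : rel T).

Definition edges : {set {set T}} :=
  [set [set x; y] | x in T, y in T & e x y].

Definition deg (x : T) : nat := #|[set y | e x y]|.

(* minimum degree delta(G) (graph assumed nonempty where used) *)
Definition mindeg : nat := \big[minn/#|T|]_(x : T) deg x.

Definition frac_cover (R : realType) (E' : {set {set T}}) (f : T -> R) : Prop :=
  (forall x, 0 <= f x)%R /\
  (forall x y, e x y -> [set x; y] \notin E' -> (1 <= f x + f y)%R).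

(* tau*(G - E') < n/2 : the minimum of sum f over fractional covers is < n/2,
   i.e. some fractional vertex cover of G - E' has total weight < n/2. *)
Definition tau_star_lt_half (R : realType) (E' : {set {set T}}) : Prop :=
  exists f : T -> R, frac_cover E' f /\
    (\sum_(v : T) f v < (#|T|%:R / 2%:R))%R.

Definition is_mu (R : realType) (k : nat) : Prop :=
  (exists E' : {set {set T}}, E' \subset edges /\ #|E'| = k /\ tau_star_lt_half R E')
  /\ (forall E' : {set {set T}}, E' \subset edges -> tau_star_lt_half R E' -> k <= #|E'|).

(* E_G(S; V \ T'): edges with both ends in S, or one end in S and the other
   outside S u T'. *)
Definition E_SVT (S T' : {set T}) : {set {set T}} :=
  [set ed in edges | [exists x, exists y,
     [&& ed == [set x; y], e x y &
        ((x \in S) && (y \in S)) || ((x \in S) && (y \notin S :|: T'))]]].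

Definition realizes (k : nat) (S T' : {set T}) : Prop :=
  [disjoint S & T'] /\ #|T'| < #|S| /\ #|E_SVT S T'| = k.

End Graph.

(* Main.v *)
Require Import Defs.
From HB Require Import structures.
From mathcomp Require Import all_boot all_order all_algebra.
From mathcomp Require Import reals.
From mathcomp Require Import zify.

Lemma sumb_card (A : finType) (b : pred A) : \sum_(y : A) (b y : nat) = #|b|.
Proof. rewrite -sum1_card [RHS]big_mkcond /=. apply: eq_bigr => y _. by rewrite unfold_in; case: (b y). Qed.

Lemma mindeg_le (T : finType) (e : rel T) x : mindeg e <= deg e x.
Proof.
rewrite /mindeg.
have : x \in index_enum T by rewrite mem_index_enum.
elim: (index_enum T) => [|a l IH] //; rewrite inE big_cons => /orP[/eqP <-|/IH H].
  by rewrite geq_minl.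
by rewrite geq_min H orbT.
Qed.

Theorem lemma24 (R : realType) (T : finType) (e : rel T)
  (e_sym : symmetric e) (e_irr : irreflexive e)
  (mu : nat) (Hmu : is_mu e R mu)
  (Hdelta : 2 <= mindeg e) (Hmu_le : mu <= mindeg e - 1)
  (S T' : {set T}) (Hreal : realizes e mu S T') :
  mindeg e - 1 <= #|S| /\ (#|S| = mindeg e - 1 -> mu = mindeg e - 1).
Proof.
case: Hreal => Hdis [HtS HE].
pose P := fun p : T * T => (p.1 \in S) && e p.1 p.2 && (p.2 \notin T').
pose w := fun p : T * T => if p.2 \in S then 1 else 2.
pose W := fun p : T * T => if P p then w p else 0.
have Hup : \sum_(p : T * T) W p <= 2 * mu.
  have -> : \sum_(p : T * T) W p = \sum_(p | P p) w p by rewrite [RHS]big_mkcond.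
  rewrite (partition_big (fun p : T * T => [set p.1; p.2]) (mem (E_SVT e S T'))); last first.
    move=> [a b]; rewrite /P /= => /andP[/andP[aS eab] bT].
    rewrite /E_SVT inE; apply/andP; split.
      by apply/imset2P; exists a b => //; rewrite inE.
    apply/existsP; exists a; apply/existsP; exists b; rewrite eqxx eab aS /=.
    by rewrite !inE (negbTE bT) orbF; case: (b \in S).
  rewrite -HE mulnC -sum_nat_const; apply: leq_sum => ed.
  move=> Hed0. rewrite inE /E_SVT inE in Hed0. move: Hed0 => /andP[_ H].
  move: H => /existsP[x /existsP[y /and3P[/eqP Hed exy Hc]]].
  rewrite Hed.
  have xy : x != y by apply/negP => /eqP xy; subst; rewrite e_irr in exy.
  case/orP: Hc => /andP[xS Hy].
  - apply: (@leq_trans (\sum_(p | P p && ([set p.1; p.2] == [set x; y])) 1)).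
      apply: leq_sum => [[a b]]; rewrite /P /w /= => /andP[_ /eqP Hab].
      have : b \in [set x; y] by rewrite -Hab !inE eqxx orbT.
      by rewrite !inE => /orP[]/eqP->; rewrite ?xS ?Hy.
    rewrite sum1dep_card.
    apply: (@leq_trans #|[set (x, y); (y, x)]|); last by rewrite cards2; case: (_ != _).
    apply: subset_leq_card; apply/subsetP => [[a b]]; rewrite !inE /P /=.
    case/andP => /andP[/andP[_ eab] _] /eqP Hab.
    have : a \in [set x; y] by rewrite -Hab !inE eqxx.
    have : b \in [set x; y] by rewrite -Hab !inE eqxx orbT.
    rewrite !inE => /orP[]/eqP Eb /orP[]/eqP Ea; rewrite Ea Eb in eab *; rewrite ?e_irr in eab; by rewrite ?eqxx ?orbT.
  - apply: (@leq_trans (\sum_(p | P p && ([set p.1; p.2] == [set x; y])) 2)).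
      by apply: leq_sum => [[a b]] _; rewrite /w; case: (b \in S).
    rewrite sum_nat_const; apply: (@leq_trans (1 * 2)) => //; rewrite leq_mul2r /=.
    rewrite -(card1 (x, y)).
    apply: subset_leq_card; apply/subsetP => [[a b]]; rewrite !inE /P /=.
    case/andP => /andP[/andP[aS eab] _] /eqP Hab.
    move: Hy; rewrite !inE negb_or => /andP[yS _].
    have : a \in [set x; y] by rewrite -Hab !inE eqxx.
    rewrite !inE => /orP[]/eqP Ea; last by move: aS; rewrite Ea (negbTE yS).
    rewrite Ea in eab *.
    have : b \in [set x; y] by rewrite -Hab !inE eqxx orbT.
    by rewrite !inE => /orP[]/eqP Eb; rewrite Eb in eab *; rewrite ?e_irr in eab; rewrite ?eqxx.
set d := mindeg e. set s := #|S|. set t := #|T'|.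
pose M := maxn (d - t) (2 * (d - t) - (s - 1)).
have Hx : forall x, x \in S -> M <= \sum_y W (x, y).
  move=> x xS.
  pose cS := \sum_y ((e x y && (y \in S)) : nat).
  pose cO := \sum_y ((e x y && (y \notin S) && (y \notin T')) : nat).
  have E1 : \sum_y W (x, y) = cS + 2 * cO.
    rewrite /cS /cO big_distrr -big_split; apply: eq_bigr => y _ /=.
    rewrite /W /P /w /= xS /=.
    case yS: (y \in S); first by rewrite (disjointFr Hdis yS); case: (e x y).
    by case: (e x y); case: (y \in T').
  have E2 : d <= cS + cO + t.
    apply: (leq_trans (@mindeg_le _ e x)).
    have -> : deg e x = \sum_y (e x y : nat).
      rewrite (@sumb_card _ (fun y => e x y)); apply: eq_card => y; by rewrite !inE.
    have -> : t = \sum_y ((y \in T') : nat) by rewrite (@sumb_card _ (mem T')).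
    rewrite /cS /cO -!big_split; apply: leq_sum => y _ /=.
    by case: (e x y); case: (y \in S); case: (y \in T').
  have E3 : cS <= s - 1.
    rewrite /cS (@sumb_card _ (fun y => e x y && (y \in S))) /s (cardsD1 x S) xS add1n subn1 /=.
    apply: subset_leq_card; apply/subsetP => y; rewrite !inE => /andP[exy ->]; rewrite andbT.
    by apply/negP => /eqP E; rewrite E e_irr in exy.
  rewrite E1 /M; lia.
have Hlow : s * M <= \sum_(p : T * T) W p.
  have -> : \sum_(p : T * T) W p = \sum_x \sum_y W (x, y).
    by rewrite pair_bigA; apply: eq_bigr => [[a b]] _.
  rewrite [X in _ <= X](bigID (mem S)) /=.
  apply: leq_trans (leq_addr _ _).
  rewrite -sum_nat_const; apply: leq_sum => x; exact: Hx.
have Hfin : s * M <= 2 * mu by apply: leq_trans Hlow Hup.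
have A : s * (d - t) <= 2 * mu.
  by apply: leq_trans Hfin; rewrite leq_mul2l leq_maxl orbT.
have B : s * (2 * (d - t) - (s - 1)) <= 2 * mu.
  by apply: leq_trans Hfin; rewrite leq_mul2l leq_maxr orbT.
have HtS' : t < s := HtS. have Hdel : 2 <= d := Hdelta. have Hm : mu <= d - 1 := Hmu_le.
clear Hx Hlow Hfin Hup HtS Hdelta Hmu_le. clear M. clearbody d s t. move: HtS' Hdel Hm => HtS Hdelta Hmu_le.
have Hs : d - 1 <= s.
  rewrite leqNgt; apply/negP => Hlt.
  have [s1|[s2|s3]] : s = 1 \/ s = 2 \/ 3 <= s by lia.
  - rewrite s1 in B HtS; nia.
  - rewrite s2 in B HtS; nia.
  - have A' : s * (d - s + 1) <= 2 * mu.
      by apply: leq_trans A; rewrite leq_mul2l; apply/orP; right; lia.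
    have [u Hu] : exists u, d = s + u + 2 by exists (d - s - 2); lia.
    rewrite Hu in A' Hmu_le.
    have E : s + u + 2 - s + 1 = u + 3 by lia.
    rewrite E in A'.
    nia.
split => // Hsd; nia.
Qed.
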